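(* Let $(\mathbf{H},m,\Delta)$ be a self-adjoint poset Hopf monoid. For each finite set $I$ let $\mathbf{d}[I]$ be the subspace of $\mathbf{k}\mathbf{H}[I]$ spanned by the products $m_{S,T}(y,z)$ with $I=S\sqcup T$, $S,T$ nonempty, $y\in\mathbf{H}[S]$, $z\in\mathbf{H}[T]$, and let $\mathbf{p}[I]$ be the subspace of primitive elements of $\mathbf{k}\mathbf{H}[I]$. Then $\mathbf{k}\mathbf{H}[I]=\mathbf{p}[I]\oplus\mathbf{d}[I]$ for every finite set $I$.
   Context: $\mathbf{k}$ is a field of characteristic $0$. A (connected) poset species $\mathbf{H}$ assigns to each finite set $I$ a locally finite poset $\mathbf{H}[I]$, $\mathbf{H}[\emptyset]=\{1\}$, and to each bijection an order-preserving bijection, functorially. A poset Hopf monoid $(\mathbf{H},m,\Delta)$ consists of order-preserving maps $m_{S,T}:\mathbf{H}[S]\times\mathbf{H}[T]\to\mathbf{H}[S\sqcup T]$ (natural, associative, unital) and $\Delta_{S,T}:\mathbf{H}[S\sqcup T]\to\mathbf{H}[S]\times\mathbf{H}[T]$ (natural, coassociative, counital), satisfying compatibility: for $I=S_1\sqcup S_2=T_1\sqcup T_2$, $A=S_1\cap T_1$, $B=S_1\cap T_2$, $C=S_2\cap T_1$, $D=S_2\cap T_2$, if $\Delta_{A,B}(x)=(x_A,x_B)$, $\Delta_{C,D}(y)=(y_C,y_D)$ then $\Delta_{T_1,T_2}(m_{S_1,S_2}(x,y))=(m_{A,C}(x_A,y_C),m_{B,D}(x_B,y_D))$. It is self-adjoint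 if $m_{S,T}$ and $\Delta_{S,T}$ form a Galois connection for all $S,T$ (i.e. $(\mathbf{H},\Delta)$ and $(\mathbf{H},m)$ form an adjoint pair: either $\Delta_{S,T}(x)\le(y,z)\iff x\le m_{S,T}(y,z)$ for all $x,y,z$, or $m_{S,T}(y,z)\le x\iff(y,z)\le\Delta_{S,T}(x)$ for all $x,y,z$). $\mathbf{k}\mathbf{H}[I]$ is the vector space with basis $\mathbf{H}[I]$, operations extended linearly. An element $p\in\mathbf{k}\mathbf{H}[I]$ is primitive if $\Delta_{S,T}(p)=0$ for all $I=S\sqcup T$ with $S,T$ nonempty. *)

(* Defs.v *)
From HB Require Import structures.
From mathcomp Require Import all_boot all_order all_algebra.
From mathcomp Require Import finmap.

Set Implicit Arguments.
Unset Strict Implicit.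
Unset Printing Implicit Defensive.

Import GRing.Theory.
Local Open Scope fset_scope.

(* Encoding of a (set) species with labels in finite subsets of nat.        *)
(* All structures H[I] (I : {fset nat}) are gathered into one carrier type; *)
(* [lab x] is the finite set I such that x \in H[I].  Operations are total  *)
(* functions on the carrier; the axioms only constrain them on elements     *)
(* with the appropriate labels.                                             *)
(*   le      : the partial order on each H[I] (only relates equal labels)   *)
(*   one     : the unique element of H[emptyset]                            *)
(*   mul x y : m_{S,T}(x,y) where S = lab x, T = lab y                      *)
(*   cop S T x : Delta_{S,T}(x) for x \in H[S \sqcup T]                     *)
(*   act s x : H[s](x), the image of x under the bijection                  *)
(*             s|_{lab x} : lab x -> s @` lab x, for a permutation s of nat *)
(*             (every bijection between finite subsets of nat extends to    *)
(*             such a permutation).                                         *)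

Record posetHopfData := PosetHopfData {
  car : choiceType;
  lab : car -> {fset nat};
  le : car -> car -> Prop;
  one : car;
  mul : car -> car -> car;
  cop : {fset nat} -> {fset nat} -> car -> car * car;
  act : (nat -> nat) -> car -> car
}.

Section PHM.
Variable H : posetHopfData.
Local Notation car := (car H).
Local Notation lab := (@lab H).
Local Notation le := (@le H).
Local Notation one := (one H).
Local Notation mul := (@mul H).
Local Notation cop := (@cop H).
Local Notation act := (@act H).

Definition le2 (p q : car * car) : Prop := le p.1 q.1 /\ le p.2 q.2.

Definition poset_species_axioms : Prop :=
  [/\ [/\ (forall x y, le x y -> lab x = lab y),
      (forall x, le x x),
      (forall x y, le x y -> le y x -> x = y),
      (forall x y z, le x y -> le y z -> le x z) &
      (forall x y, exists s : seq car, forall z, le x z -> le z y -> z \in s)],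
      lab one = fset0 /\ (forall x, lab x = fset0 -> x = one) &
      [/\ (forall s x, bijective s -> lab (act s x) = s @` lab x),
          (forall x, act id x = x),
          (forall s t x, bijective s -> bijective t ->
              act (s \o t) x = act s (act t x)),
          (forall s t x, bijective s -> bijective t ->
              {in lab x, s =1 t} -> act s x = act t x) &
          (forall s x y, bijective s -> le x y -> le (act s x) (act s y))]].

Definition hopf_monoid_axioms : Prop :=
  [/\ [/\
   (forall x y, [disjoint lab x & lab y] -> lab (mul x y) = lab x `|` lab y),
   (forall S T x, [disjoint S & T] -> lab x = S `|` T ->
      lab (cop S T x).1 = S /\ lab (cop S T x).2 = T),
   (forall x x' y y', [disjoint lab x & lab y] -> le x x' -> le y y' ->
      le (mul x y) (mul x' y')) &
   (forall S T x x', [disjoint S & T] -> lab x = S `|` T -> le x x' ->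
      le2 (cop S T x) (cop S T x'))],
   [/\
   (forall s x y, bijective s -> [disjoint lab x & lab y] ->
      act s (mul x y) = mul (act s x) (act s y)) &
   (forall s S T x, bijective s -> [disjoint S & T] -> lab x = S `|` T ->
      cop (s @` S) (s @` T) (act s x) =
      (act s (cop S T x).1, act s (cop S T x).2))] &
   [/\
   (forall x y z, [disjoint lab x & lab y] -> [disjoint lab x & lab z] ->
      [disjoint lab y & lab z] -> mul (mul x y) z = mul x (mul y z)),
   (forall x, mul one x = x /\ mul x one = x),
   (forall R S T x, [disjoint R & S] -> [disjoint R & T] -> [disjoint S & T] ->
      lab x = R `|` S `|` T ->
      let ab := cop (R `|` S) T x in
      let cd := cop R (S `|` T) x in
      cop R S ab.1 = (cd.1, (cop S T cd.2).1) /\ ab.2 = (cop S T cd.2).2),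
   (forall x, cop (lab x) fset0 x = (x, one) /\ cop fset0 (lab x) x = (one, x)) &
   (forall S1 S2 T1 T2 x y, [disjoint S1 & S2] -> [disjoint T1 & T2] ->
      S1 `|` S2 = T1 `|` T2 -> lab x = S1 -> lab y = S2 ->
      let xx := cop (S1 `&` T1) (S1 `&` T2) x in
      let yy := cop (S2 `&` T1) (S2 `&` T2) y in
      cop T1 T2 (mul x y) = (mul xx.1 yy.1, mul xx.2 yy.2))]].

Definition poset_hopf_monoid : Prop :=
  poset_species_axioms /\ hopf_monoid_axioms.

Definition self_adjoint : Prop :=
  (forall S T x y z, [disjoint S & T] -> lab x = S `|` T -> lab y = S ->
      lab z = T -> (le2 (cop S T x) (y, z) <-> le x (mul y z)))
  \/
  (forall S T x y z, [disjoint S & T] -> lab x = S `|` T -> lab y = S ->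
      lab z = T -> (le (mul y z) x <-> le2 (y, z) (cop S T x))).

(* Linearization over a field k.  Vectors are finitely supported functions  *)
(* car -> k (coefficients on the basis); kH[I] consists of those supported  *)
(* on H[I].                                                                 *)
Variable k : fieldType.

Definition vect := {fsfun car -> k with 0%R}.

Definition in_kH (I : {fset nat}) (v : vect) : Prop :=
  forall x, x \in finsupp v -> lab x = I.

(* coefficient of the basis element (y, z) of k(H[S] x H[T]) in Delta_{S,T}(v) *)
Definition copL (S T : {fset nat}) (v : vect) (yz : car * car) : k :=
  (\sum_(x <- finsupp v | cop S T x == yz) v x)%R.

Definition nontriv_decomp (I S T : {fset nat}) : Prop :=
  [/\ [disjoint S & T], S `|` T = I, S != fset0 & T != fset0].

Definition primitive (I : {fset nat}) (v : vect) : Prop :=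
  in_kH I v /\
  forall S T, nontriv_decomp I S T -> forall yz, copL S T v yz = 0%R.

Definition in_decomposables (I : {fset nat}) (v : vect) : Prop :=
  in_kH I v /\
  exists s : seq (k * (car * car)),
    (forall t, t \in s -> nontriv_decomp I (lab t.2.1) (lab t.2.2)) /\
    forall x, v x = (\sum_(t <- s) t.1 * (mul t.2.1 t.2.2 == x)%:R)%R.

Definition direct_sum_p_d (I : {fset nat}) : Prop :=
  (forall v, in_kH I v -> exists p d,
      [/\ primitive I p, in_decomposables I d & forall x, v x = (p x + d x)%R])
  /\ (forall v, primitive I v -> in_decomposables I v -> forall x, v x = 0%R).

End PHM.

(* Main.v *)
Require Import Defs.
From mathcomp Require Import all_boot all_order all_algebra.
From mathcomp Require Import finmap.
From Stdlib Require Import Classical ClassicalEpsilon.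

Set Implicit Arguments.
Unset Strict Implicit.
Unset Printing Implicit Defensive.

Import GRing.Theory.
Local Open Scope fset_scope.

Section Aux.
Variable H : posetHopfData.
Local Notation car := (Defs.car H).
Local Notation lab := (@Defs.lab H).
Local Notation mul := (@Defs.mul H).
Local Notation cop := (@Defs.cop H).
Local Notation one := (Defs.one H).

Hypothesis HH : poset_hopf_monoid H.

Lemma mul_lab x y : [disjoint lab x & lab y] -> lab (mul x y) = lab x `|` lab y.
Proof. by case: HH => _ [[h _ _ _] _ _]; apply: h. Qed.

Lemma cop_lab S T x : [disjoint S & T] -> lab x = S `|` T ->
  lab (cop S T x).1 = S /\ lab (cop S T x).2 = T.
Proof. by case: HH => _ [[_ h _ _] _ _]; apply: h. Qed.

Lemma mul1x x : mul one x = x.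
Proof. by case: HH => _ [_ _ [_ h _ _ _]]; case: (h x). Qed.

Lemma mulx1 x : mul x one = x.
Proof. by case: HH => _ [_ _ [_ h _ _ _]]; case: (h x). Qed.

Lemma cop_x0 x : cop (lab x) fset0 x = (x, one).
Proof. by case: HH => _ [_ _ [_ _ _ h _]]; case: (h x). Qed.

Lemma cop_0x x : cop fset0 (lab x) x = (one, x).
Proof. by case: HH => _ [_ _ [_ _ _ h _]]; case: (h x). Qed.

Lemma coassoc R S T x : [disjoint R & S] -> [disjoint R & T] -> [disjoint S & T] ->
      lab x = R `|` S `|` T ->
      cop R S (cop (R `|` S) T x).1 = ((cop R (S `|` T) x).1, (cop S T (cop R (S `|` T) x).2).1)
      /\ (cop (R `|` S) T x).2 = (cop S T (cop R (S `|` T) x).2).2.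
Proof. by case: HH => _ [_ _ [_ _ h _ _]]; apply: h. Qed.

Lemma compat S1 S2 T1 T2 x y : [disjoint S1 & S2] -> [disjoint T1 & T2] ->
      S1 `|` S2 = T1 `|` T2 -> lab x = S1 -> lab y = S2 ->
      cop T1 T2 (mul x y) =
      (mul (cop (S1 `&` T1) (S1 `&` T2) x).1 (cop (S2 `&` T1) (S2 `&` T2) y).1,
       mul (cop (S1 `&` T1) (S1 `&` T2) x).2 (cop (S2 `&` T1) (S2 `&` T2) y).2).
Proof. by case: HH => _ [_ _ [_ _ _ _ h]]; apply: h. Qed.

Lemma fdisjI0 (A B : {fset nat}) : [disjoint A & B] -> A `&` B = fset0.
Proof.
move=> /fdisjointP dAB; apply/fsetP => x; rewrite !inE.
by case xA: (x \in A) => //=; apply/negbTE/dAB.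
Qed.

Lemma cop_swap_mul y z : [disjoint lab y & lab z] ->
  cop (lab y) (lab z) (mul z y) = (y, z).
Proof.
move=> d.
have d' : [disjoint lab z & lab y] by rewrite fdisjoint_sym.
have e : lab z `|` lab y = lab y `|` lab z by rewrite fsetUC.
rewrite (@compat (lab z) (lab y) (lab y) (lab z)) //.
rewrite (fdisjI0 d') fsetIid fsetIid (fdisjI0 d) cop_0x cop_x0 /=.
by rewrite mul1x mulx1.
Qed.

Variable R : car -> car -> Prop.
Hypothesis Rrefl : forall x, R x x.
Hypothesis Ranti : forall x y, R x y -> R y x -> x = y.
Hypothesis Radj : forall S T x y z, [disjoint S & T] -> lab x = S `|` T -> lab y = S ->
  lab z = T -> (R (mul y z) x <-> R y (cop S T x).1 /\ R z (cop S T x).2).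

Lemma mulC y z : [disjoint lab y & lab z] -> mul y z = mul z y.
Proof.
move=> d.
have d' : [disjoint lab z & lab y] by rewrite fdisjoint_sym.
apply: Ranti.
- apply/(@Radj (lab y) (lab z)) => //.
    by rewrite mul_lab // fsetUC.
  by rewrite cop_swap_mul.
- apply/(@Radj (lab z) (lab y)) => //.
    by rewrite mul_lab // fsetUC.
  by rewrite cop_swap_mul.
Qed.

Lemma copC S T x : [disjoint S & T] -> lab x = S `|` T ->
  cop T S x = ((cop S T x).2, (cop S T x).1).
Proof.
move=> d lx.
have d' : [disjoint T & S] by rewrite fdisjoint_sym.
have lx' : lab x = T `|` S by rewrite fsetUC.
case: (cop_lab d lx) => l1 l2; case: (cop_lab d' lx') => l3 l4.
case E1: (cop S T x) => [a b]; case E2: (cop T S x) => [c e].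
rewrite E1 /= in l1 l2; rewrite E2 /= in l3 l4.
have h1 : R (mul a b) x by apply/(Radj d lx) => //; rewrite E1.
have h2 : R (mul c e) x by apply/(Radj d' lx') => //; rewrite E2.
rewrite mulC ?l1 ?l2 // in h1.
rewrite mulC ?l3 ?l4 // in h2.
move/(Radj d' lx'): h1; rewrite E2 /= => /(_ l2 l1) [bc ae].
move/(Radj d lx): h2; rewrite E1 /= => /(_ l4 l3) [ea cb].
by rewrite (Ranti bc cb) (Ranti ae ea).
Qed.

End Aux.

Ltac kill h1 h2 := first [done | by move: (h1 isT) | by move: (h2 isT) | by move: (h1 isT) (h2 isT)].
Section SetL.
Implicit Types A B S J : {fset nat}.

Lemma s_ADB S A B : [disjoint A & B] -> [disjoint A `\` S & B].
Proof. by move/fdisjointP=> d; apply/fdisjointP => x; rewrite inE => /andP [_ /d]. Qed.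

Lemma s_DU S A B : S `<=` A -> [disjoint A & B] -> (A `\` S) `|` B = (A `|` B) `\` S.
Proof.
move=> /fsubsetP s /fdisjointP d; apply/fsetP => x; rewrite !inE.
move: (s x) (d x); case: (x \in S); case: (x \in A); case: (x \in B) => //= h1 h2; kill h1 h2.
Qed.

Lemma s_SUD S A : S `<=` A -> S `|` (A `\` S) = A.
Proof.
move=> /fsubsetP sSJ; apply/fsetP => x; rewrite !inE.
by case xS: (x \in S) => //=; rewrite sSJ.
Qed.

Lemma s_ID1 S A B : S `<=` A -> [disjoint A & B] -> ((A `|` B) `\` S) `&` A = A `\` S.
Proof.
move=> /fsubsetP s /fdisjointP d; apply/fsetP => x; rewrite !inE.
move: (s x) (d x); case: (x \in S); case: (x \in A); case: (x \in B) => //= h1 h2; kill h1 h2.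
Qed.

Lemma s_ID2 S A B : S `<=` A -> [disjoint A & B] -> ((A `|` B) `\` S) `&` B = B.
Proof.
move=> /fsubsetP s /fdisjointP d; apply/fsetP => x; rewrite !inE.
move: (s x) (d x); case: (x \in S); case: (x \in A); case: (x \in B) => //= h1 h2; kill h1 h2.
Qed.

Lemma s_IB0 S A B : S `<=` A -> [disjoint A & B] -> S `&` B = fset0.
Proof.
move=> /fsubsetP s /fdisjointP d; apply/fsetP => x; rewrite !inE.
move: (s x) (d x); case: (x \in S); case: (x \in A); case: (x \in B) => //= h1 h2; kill h1 h2.
Qed.

Lemma s_U3 S A B : S `<=` A -> S `|` (A `\` S) `|` B = A `|` B.
Proof. by move=> s; rewrite s_SUD. Qed.

Lemma s_IU S A B : S `<=` A `|` B -> (S `&` A) `|` (S `&` B) = S.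
Proof.
move=> /fsubsetP s; apply/fsetP => x; rewrite !inE.
move: (s x); rewrite !inE; case: (x \in S); case: (x \in A); case: (x \in B) => //= h1; kill h1 h1.
Qed.

Lemma s_Idis S A B : [disjoint A & B] -> [disjoint S `&` A & S `&` B].
Proof.
move/fdisjointP=> d; apply/fdisjointP => x; rewrite !inE => /andP [_ xA].
by rewrite (negbTE (d x xA)) andbF.
Qed.

Lemma s_nsub S A B : S `<=` A `|` B -> ~~ (S `<=` A) -> S `&` B != fset0.
Proof.
move=> /fsubsetP s /fsubsetPn [x xS xA]; apply/eqP => /fsetP /(_ x).
rewrite !inE xS /=; move: (s x xS); rewrite inE (negbTE xA) /= => -> //.
Qed.

Lemma s_neq A B : [disjoint A & B] -> B != fset0 -> A != A `|` B.
Proof.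
move=> /fdisjointP d; case: (fset_0Vmem B) => [->|[x xB]]; first by rewrite eqxx.
move=> _; apply/eqP => /fsetP /(_ x); rewrite !inE xB orbT.
by case: (boolP (x \in A)) => // /d; rewrite xB.
Qed.

Lemma s_mem0 (i : nat) A : i \in A -> A != fset0.
Proof. by move=> h; apply/eqP => e; rewrite e inE in h. Qed.

End SetL.

Section SetLemmas.
Implicit Types A B S J : {fset nat}.

Lemma fsetUD_sub S J : S `<=` J -> S `|` (J `\` S) = J.
Proof.
move=> /fsubsetP sSJ; apply/fsetP => x; rewrite !inE.
by case xS: (x \in S) => //=; rewrite sSJ.
Qed.

Lemma fdisjointD S J : [disjoint S & J `\` S].
Proof. by apply/fdisjointP => x xS; rewrite !inE xS. Qed.

Lemma subs_card S J : S `<=` J -> S != J -> (#|` S| < #|` J|)%N.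
Proof. by move=> sSJ nSJ; apply: fproper_ltn_card; rewrite fproperEneq nSJ sSJ. Qed.

End SetLemmas.

Section Lin.
Variable H : posetHopfData.
Local Notation car := (Defs.car H).
Local Notation lab := (@Defs.lab H).
Local Notation mul := (@Defs.mul H).
Local Notation cop := (@Defs.cop H).
Local Notation one := (Defs.one H).
Variable k : fieldType.
Local Open Scope ring_scope.

Definition lin (F : car -> k) (s : seq (k * car)) : k := \sum_(t <- s) t.1 * F t.2.

Lemma lin_group (T : eqType) (g : car -> T) (F : T -> k) s :
  lin (fun y => F (g y)) s =
  \sum_(u <- undup [seq g t.2 | t <- s]) F u * lin (fun y => (g y == u)%:R) s.
Proof.
rewrite /lin; under [RHS]eq_bigr do rewrite big_distrr /=.
rewrite exchange_big /=; apply: eq_big_seq => t ts.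
rewrite (bigD1_seq (g t.2)) ?undup_uniq ?mem_undup ?(map_f (fun t => g t.2)) //=.
rewrite eqxx mulr1 mulrC big1 ?addr0 // => u /negbTE nu.
by rewrite eq_sym nu mulr0 mulr0.
Qed.

Lemma lin_group0 (T : eqType) (g : car -> T) (F : T -> k) s :
  (forall u, lin (fun y => (g y == u)%:R) s = 0) -> lin (fun y => F (g y)) s = 0.
Proof. by move=> h; rewrite lin_group big1 // => u _; rewrite h mulr0. Qed.

Lemma eq_in_lin F G s : (forall t, t \in s -> F t.2 = G t.2) -> lin F s = lin G s.
Proof. by move=> h; apply: eq_big_seq => t ts; rewrite h. Qed.

Variable i0 : nat.

Definition subs (J : {fset nat}) : seq {fset nat} :=
  filter (fun S : {fset nat} => (i0 \in S) && (S != J)) (enum_fset (fpowerset J)).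

Definition ll (S : {fset nat}) w := (cop S (lab w `\` S) w).1.
Definition rr (S : {fset nat}) w := (cop S (lab w `\` S) w).2.

Fixpoint Pn (n : nat) (w : car) : seq (k * car) :=
  match n with
  | 0 => [:: (1, w)]
  | n'.+1 => (1, w) :: flatten [seq [seq (- t.1, mul t.2 (rr U w)) | t <- Pn n' (ll U w)]
                                | U <- subs (lab w)]
  end.

Lemma lin_PnS F n w : lin F (Pn n.+1 w) =
  F w - \sum_(S <- subs (lab w)) lin (fun y => F (mul y (rr S w))) (Pn n (ll S w)).
Proof.
rewrite /lin /= big_cons mul1r big_flatten big_map; congr (_ + _).
rewrite -sumrN; apply: eq_bigr => S _; rewrite big_map -sumrN.
by apply: eq_bigr => t _ /=; rewrite mulNr.
Qed.

Lemma mem_subs (S J : {fset nat}) : S \in subs J = [&& S `<=` J, i0 \in S & S != J].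
Proof. by rewrite mem_filter fpowersetE andbC. Qed.

Hypothesis HH : poset_hopf_monoid H.

Lemma ll_lab S w : S `<=` lab w -> lab (ll S w) = S.
Proof. by move=> sS; case: (@cop_lab _ HH S (lab w `\` S) w) => //; [apply: fdisjointD | rewrite fsetUD_sub]. Qed.

Lemma rr_lab S w : S `<=` lab w -> lab (rr S w) = lab w `\` S.
Proof. by move=> sS; case: (@cop_lab _ HH S (lab w `\` S) w) => //; [apply: fdisjointD | rewrite fsetUD_sub]. Qed.

Lemma Pn_lab n w t : t \in Pn n w -> lab t.2 = lab w.
Proof.
elim: n w t => [|n IH] w t /=; first by rewrite inE => /eqP ->.
rewrite inE => /orP [/eqP -> //|/flattenP [s /mapP [S]]].
rewrite mem_subs => /and3P [sS _ _] -> /mapP [t' t'P ->] /=.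
rewrite mul_lab // (IH _ _ t'P) ll_lab // ?rr_lab ?fsetUD_sub //.
by rewrite fdisjointD.
Qed.

Lemma PnS_eq n w : Pn n.+1 w = (1, w) :: flatten [seq [seq (- t.1, mul t.2 (rr U w)) | t <- Pn n (ll U w)]
                                | U <- subs (lab w)].
Proof. by []. Qed.

Lemma Pn_stable n w : (#|` lab w| <= n)%N -> Pn n.+1 w = Pn n w.
Proof.
elim: n w => [|n IH] w hw.
  have l0 : lab w = fset0 by apply/eqP; rewrite -cardfs_eq0; move: hw; case: (#|` _|).
  rewrite /= /subs l0 (@eq_in_filter _ _ pred0) ?filter_pred0 //.
  by move=> S; rewrite fpowersetE fsubset0 => /eqP ->; rewrite eqxx andbF.
rewrite [LHS]PnS_eq [RHS]PnS_eq; congr (_ :: flatten _); apply/eq_in_map => S.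
rewrite mem_subs => /and3P [sS _ nS]; rewrite IH // ll_lab //.
by have := subs_card sS nS => h; rewrite -ltnS; apply: leq_trans h hw.
Qed.

Lemma Pn_stable_le m n w : (#|` lab w| <= n)%N -> (n <= m)%N -> Pn m w = Pn n w.
Proof.
move=> hw /subnK <-; elim: (m - n)%N => [|d IH] //.
by rewrite addSn Pn_stable ?IH //; apply: leq_trans hw (leq_addl _ _).
Qed.


Definition cS (A B : {fset nat}) s yz := lin (fun y => (cop A B y == yz)%:R) s.

Hypothesis Hcoc : forall S T x, [disjoint S & T] -> lab x = S `|` T ->
  cop T S x = ((cop S T x).2, (cop S T x).1).

Lemma cS_swap A B s y z : [disjoint A & B] -> (forall t, t \in s -> lab t.2 = A `|` B) ->
  cS A B s (y, z) = cS B A s (z, y).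
Proof.
move=> d hl; apply: eq_in_lin => t ts.
rewrite (@Hcoc B A) ?(hl t ts) 1?fdisjoint_sym 1?fsetUC //.
by case: (cop B A t.2) => a b /=; rewrite !xpair_eqE andbC.
Qed.

Lemma key_coassoc S A B w : S `<=` A -> [disjoint A & B] -> lab w = A `|` B ->
  ll S (cop A B w).1 = ll S w /\
  cop (A `\` S) B (rr S w) = (rr S (cop A B w).1, (cop A B w).2).
Proof.
move=> sSA dAB lw.
have [lA lB] := cop_lab HH dAB lw.
have dS : [disjoint S & A `\` S] := fdisjointD S A.
have dSB : [disjoint S & B] := fdisjointWl sSA dAB.
have dDB := s_ADB S dAB.
have lw3 : lab w = S `|` (A `\` S) `|` B by rewrite s_U3.
have [h1 h2] := coassoc HH dS dSB dDB lw3.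
rewrite s_SUD // in h1 h2.
rewrite s_DU // -lw in h1 h2.
rewrite /ll /rr lA h1 /=; split => //.
by rewrite h2; case: (cop (A `\` S) B _).
Qed.

Lemma cop_mul_sub S A B w y : S `<=` A -> [disjoint A & B] -> lab w = A `|` B -> lab y = S ->
  cop A B (mul y (rr S w)) = (mul y (rr S (cop A B w).1), (cop A B w).2).
Proof.
move=> sSA dAB lw ly.
have sSw : S `<=` lab w by rewrite lw; apply: fsubset_trans sSA (fsubsetUl _ _).
rewrite (@compat _ HH S (lab w `\` S) A B) //; first last.
- exact: rr_lab.
- by rewrite s_SUD.
- exact: fdisjointD.
have eSA : S `&` A = S by apply/fsetIidPl.
rewrite eSA (s_IB0 sSA dAB).
rewrite [in X in cop X _ (rr S w)]lw [in X in cop _ X (rr S w)]lw (s_ID1 sSA dAB) (s_ID2 sSA dAB).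
have -> : cop S fset0 y = (y, one) by rewrite -ly cop_x0.
by have [_ ->] := key_coassoc sSA dAB lw; rewrite /= mul1x.
Qed.

Lemma Pn_prim n w A B yz : (#|` lab w| <= n)%N -> i0 \in lab w ->
  nontriv_decomp (lab w) A B -> cS A B (Pn n w) yz = 0.
Proof.
elim: n w A B yz => [|n IH] w A B yz hw iw [dAB UAB nA nB].
  by move: hw; rewrite leqn0 cardfs_eq0 => /eqP l0; rewrite l0 inE in iw.
wlog iA : A B yz dAB UAB nA nB / i0 \in A.
  move=> Hw; case iA: (i0 \in A); first by apply: Hw.
  have iB : i0 \in B by move: iw; rewrite -UAB inE iA.
  case: yz => y z; rewrite cS_swap //; last by move=> t /Pn_lab ->.
  by apply: Hw => //; [rewrite fdisjoint_sym | rewrite fsetUC].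
have lw : lab w = A `|` B by rewrite UAB.
have [lA lB] := cop_lab HH dAB lw.
set wA := (cop A B w).1; set wB := (cop A B w).2.
rewrite /cS lin_PnS.
have E : \sum_(S <- subs (lab w)) lin (fun y => (cop A B (mul y (rr S w)) == yz)%:R) (Pn n (ll S w))
       = \sum_(S <- subs (lab w) | S `<=` A)
            lin (fun y => ((mul y (rr S wA), wB) == yz)%:R) (Pn n (ll S wA)).
  rewrite [RHS]big_mkcond /=; apply: eq_big_seq => S; rewrite mem_subs => /and3P [sSJ iS nSJ].
  have lS : forall t, t \in Pn n (ll S w) -> lab t.2 = S by move=> t /Pn_lab ->; rewrite ll_lab.
  case: ifP => sSA.
    have [e1 _] := key_coassoc sSA dAB lw; rewrite /wA e1.
    by apply: eq_in_lin => t /lS lt; rewrite cop_mul_sub.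
  set c := cop ((lab w `\` S) `&` A) ((lab w `\` S) `&` B) (rr S w).
  rewrite (@eq_in_lin _ (fun y => ((mul (cop (S `&` A) (S `&` B) y).1 c.1,
                                   mul (cop (S `&` A) (S `&` B) y).2 c.2) == yz)%:R)); last first.
    have d1 : [disjoint S & lab w `\` S] := fdisjointD S (lab w).
    have u1 : S `|` (lab w `\` S) = A `|` B by rewrite s_SUD.
    have l1 : lab (rr S w) = lab w `\` S by apply: rr_lab.
    by move=> t /lS lt; rewrite (@compat _ HH S (lab w `\` S) A B _ (rr S w) d1 dAB u1 lt l1).
  apply: (@lin_group0 _ (cop (S `&` A) (S `&` B))
            (fun uv => ((mul uv.1 c.1, mul uv.2 c.2) == yz)%:R)) => u.
  apply: (IH (ll S w) (S `&` A) (S `&` B) u); rewrite ll_lab //.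
  - by have := subs_card sSJ nSJ => h; rewrite -ltnS; apply: leq_trans h hw.
  split.
  - exact: s_Idis.
  - by apply: s_IU; rewrite -lw.
  - by apply: (@s_mem0 i0); rewrite inE iS iA.
  - by apply: (@s_nsub S A B); [rewrite -lw | rewrite sSA].
rewrite E {E}.
have nAw : A != lab w by rewrite lw; apply: s_neq.
have sAw : A `<=` lab w by rewrite lw; apply: fsubsetUl.
rewrite -big_filter (perm_big (A :: subs A)) ?big_cons; last first.
  apply: uniq_perm.
  - by rewrite filter_uniq // filter_uniq // fset_uniq.
  - by rewrite /= mem_subs eqxx !andbF /= filter_uniq // fset_uniq.
  move=> S; rewrite mem_filter inE !mem_subs.
  case: (eqVneq S A) => [->|nSA] /=; first by rewrite fsubset_refl sAw iA nAw.
  case sSA: (S `<=` A) => //=.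
  rewrite (fsubset_trans sSA sAw) /=.
  case: (i0 \in S) => //=.
  apply/negP => /eqP e; move: sSA; rewrite e => sWA.
  by move: nAw; rewrite eqEfsubset sAw sWA.
have cA : cop (lab wA) fset0 wA = (wA, one) := cop_x0 HH wA.
rewrite lA in cA.
rewrite {1}/ll {1}/rr lA fsetDv cA /=.
rewrite (@eq_in_lin (fun y => ((mul y one, wB) == yz)%:R) (fun y => ((y, wB) == yz)%:R)); last by move=> t _; rewrite mulx1.
have cardA : (#|` lab wA| <= n)%N.
  by rewrite lA; have := subs_card sAw nAw => h; rewrite -ltnS; apply: leq_trans h hw.
rewrite -(Pn_stable cardA) lin_PnS lA subrK.
by rewrite /wA /wB -surjective_pairing subrr.
Qed.

End Lin.

Lemma max_ex (T : eqType) (R : T -> T -> Prop) (Rtrans : forall x y z, R x y -> R y z -> R x z)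
  (Ranti : forall x y, R x y -> R y x -> x = y) (L : seq T) x :
  x \in L -> exists2 m, m \in L & forall y, y \in L -> R m y -> y = m.
Proof.
elim: L x => [|a L IH] x //.
case: L IH => [|b L] IH.
  by move=> _; exists a; rewrite ?inE // => y; rewrite inE => /eqP ->.
move=> _; have [m mL hm] := IH b (mem_head _ _).
case: (classic (R m a)) => Rma.
  exists a; first exact: mem_head.
  move=> y; rewrite inE => /orP [/eqP -> //|yL] Ray.
  have e := hm y yL (Rtrans _ _ _ Rma Ray); subst y.
  by rewrite (Ranti _ _ Rma Ray).
exists m; first by rewrite inE mL orbT.
move=> y; rewrite inE => /orP [/eqP -> //|yL]; last exact: hm.
Qed.

Section Final.
Variable H : posetHopfData.
Local Notation car := (Defs.car H).
Local Notation lab := (@Defs.lab H).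
Local Notation mul := (@Defs.mul H).
Local Notation cop := (@Defs.cop H).
Local Notation one := (Defs.one H).
Variable k : fieldType.
Local Open Scope ring_scope.
Hypothesis HH : poset_hopf_monoid H.

Definition pb (P : Prop) : bool := if excluded_middle_informative P then true else false.
Lemma pbT (P : Prop) : P -> pb P = true.
Proof. by rewrite /pb; case: excluded_middle_informative. Qed.
Lemma pbF (P : Prop) : ~ P -> pb P = false.
Proof. by rewrite /pb; case: excluded_middle_informative. Qed.

Lemma copL_sum S T (v : vect H k) yz :
  copL S T v yz = \sum_(x <- finsupp v) v x * (cop S T x == yz)%:R.
Proof.
rewrite /copL big_mkcond /=; apply: eq_bigr => x _.
by case: eqP => _; rewrite ?mulr1 ?mulr0.
Qed.

Lemma sum_supp_self (v : vect H k) x : \sum_(w <- finsupp v) v w * (w == x)%:R = v x.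
Proof.
case: (boolP (x \in finsupp v)) => xs.
  rewrite (bigD1_seq x) ?fset_uniq //= eqxx mulr1 big1 ?addr0 // => w /negbTE ->.
  by rewrite mulr0.
rewrite fsfun_dflt // big_seq big1 // => w ws; case: eqP => [e|_]; last by rewrite mulr0.
by subst w; rewrite ws in xs.
Qed.

Section Uniq.
Variable R : car -> car -> Prop.
Hypothesis Rrefl : forall x, R x x.
Hypothesis Ranti : forall x y, R x y -> R y x -> x = y.
Hypothesis Rtrans : forall x y z, R x y -> R y z -> R x z.
Hypothesis Radj : forall S T x y z, [disjoint S & T] -> lab x = S `|` T -> lab y = S ->
  lab z = T -> (R (mul y z) x <-> R y (cop S T x).1 /\ R z (cop S T x).2).

Lemma uniq_part I (v : vect H k) : primitive I v -> in_decomposables I v -> forall x, v x = 0.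
Proof.
move=> [kv pv] [_ [s [hs hv]]] x.
case: (boolP (x \in finsupp v)) => [xs|]; last by move/fsfun_dflt.
exfalso.
have [m ms hm] := max_ex Rtrans Ranti xs.
have vm : v m != 0 by rewrite -mem_finsupp.
have /hasP [t ts /eqP et] : has (fun t : k * (car * car) => mul t.2.1 t.2.2 == m) s.
  apply/negPn/negP => hn; move: vm; rewrite hv big_seq big1 ?eqxx // => t ts.
  case: eqP => e; last by rewrite mulr0.
  by move/hasP: hn => hn; exfalso; apply: hn; exists t => //; apply/eqP.
have [dab uab na nb] := hs t ts.
set a := t.2.1 in et dab uab na nb; set b := t.2.2 in et dab uab na nb.
pose G y := (pb (R m y))%:R : k.
have e1 : \sum_(y <- finsupp v) v y * G y = v m.
  rewrite (bigD1_seq m) ?fset_uniq //= /G pbT // mulr1 big_seq_cond big1 ?addr0 //.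
  move=> y /andP [ys nym]; rewrite pbF ?mulr0 //.
  by move=> Rmy; move: nym; rewrite (hm y ys Rmy) eqxx.
have e2 : \sum_(y <- finsupp v) v y * G y = 0.
  have -> : \sum_(y <- finsupp v) v y * G y =
            lin (fun y => (pb (R a (cop (lab a) (lab b) y).1 /\ R b (cop (lab a) (lab b) y).2))%:R)
                [seq (v y, y) | y <- finsupp v].
    rewrite /lin big_map; apply: eq_big_seq => y ys /=; congr (_ * _%:R).
    have ly : lab y = lab a `|` lab b by rewrite uab; apply: kv.
    rewrite /G -et; case: (classic (R (mul a b) y)) => h.
      by rewrite !pbT //; apply/(Radj dab ly erefl erefl).
    by rewrite !pbF // => /(Radj dab ly erefl erefl).
  apply: (@lin_group0 _ _ _ (cop (lab a) (lab b))
           (fun uv => (pb (R a uv.1 /\ R b uv.2))%:R)) => u.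
  rewrite /lin big_map /= -copL_sum; apply: pv.
  by split.
by move: vm; rewrite -e1 e2 eqxx.
Qed.
End Uniq.

Definition mk (T : choiceType) (g : T -> car) (s : seq (k * T)) : vect H k :=
  [fsfun x in [fset g t.2 | t in s] => \sum_(t <- s) t.1 * (g t.2 == x)%:R].

Lemma mkE (T : choiceType) (g : T -> car) s x :
  mk g s x = \sum_(t <- s) t.1 * (g t.2 == x)%:R.
Proof.
rewrite /mk fsfunE; case: ifP => // hx; symmetry; rewrite big_seq big1 // => t ts.
case: eqP => e; last by rewrite mulr0.
by move: hx; rewrite -e (in_imfset _ (fun t : k * T => g t.2) ts).
Qed.

Lemma mk_supp (T : choiceType) (g : T -> car) s x :
  x \in finsupp (mk g s) -> exists2 t, t \in s & g t.2 = x.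
Proof.
rewrite mem_finsupp mkE => nz.
have /hasP [t ts /eqP e] : has (fun t : k * T => g t.2 == x) s; last by exists t.
apply/negPn/negP => hn; move: nz; rewrite big_seq big1 ?eqxx // => t ts.
case: eqP => e; last by rewrite mulr0.
by move/hasP: hn => hn; exfalso; apply: hn; exists t => //; apply/eqP.
Qed.

Lemma copL_mk A B s yz : copL A B (mk id s) yz = cS A B s yz.
Proof.
rewrite copL_sum (@big_fset_incl _ _ _ _ _ [fset (id t.2) | t in s]); last first.
- by move=> x _ /fsfun_dflt ->; rewrite mul0r.
- by apply/fsubsetP => x /mk_supp [t ts <-]; apply: in_imfset.
under eq_bigr do rewrite mkE big_distrl /=.
rewrite exchange_big /cS /lin /=; apply: eq_big_seq => t ts.
rewrite (bigD1_seq t.2) ?fset_uniq ?(in_imfset _ (fun t : k * car => t.2) ts) //=.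
rewrite eqxx mulr1 big1 ?addr0 // => x /negbTE nx.
by rewrite eq_sym nx mulr0 mul0r.
Qed.

Hypothesis Hcoc : forall S T x, [disjoint S & T] -> lab x = S `|` T ->
  cop T S x = ((cop S T x).2, (cop S T x).1).

Variable i0 : nat.

Definition Pw w := Pn k i0 (#|` lab w|).+1 w.
Definition Dseq w : seq (k * (car * car)) :=
  flatten [seq [seq (t.1, (t.2, rr U w)) | t <- Pn k i0 #|` lab w| (ll U w)]
          | U <- subs i0 (lab w)].

Lemma lin_Pw F w : lin F (Pw w) = F w - \sum_(t <- Dseq w) t.1 * F (mul t.2.1 t.2.2).
Proof.
rewrite /Pw lin_PnS; congr (_ - _); rewrite /Dseq big_flatten big_map.
by apply: eq_bigr => U _; rewrite big_map.
Qed.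

Lemma Dseq_nt w t : t \in Dseq w -> nontriv_decomp (lab w) (lab t.2.1) (lab t.2.2).
Proof.
move=> /flattenP [s /mapP [U]]; rewrite mem_subs => /and3P [sU iU nU] -> /mapP [t' t'P ->] /=.
rewrite (Pn_lab HH t'P) (ll_lab HH sU) (rr_lab HH sU); split.
- exact: fdisjointD.
- exact: s_SUD.
- exact: (s_mem0 iU).
- apply/negP; rewrite fsetD_eq0 => sw; move: nU.
  by rewrite eqEfsubset sU sw.
Qed.

Definition ps (v : vect H k) := flatten [seq [seq (v x * t.1, t.2) | t <- Pw x] | x <- finsupp v].
Definition ds (v : vect H k) := flatten [seq [seq (v x * t.1, t.2) | t <- Dseq x] | x <- finsupp v].

Lemma lin_ps F v : lin F (ps v) = \sum_(x <- finsupp v) v x * lin F (Pw x).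
Proof.
rewrite /lin /ps big_flatten big_map; apply: eq_bigr => x _.
by rewrite big_map big_distrr; apply: eq_bigr => t _ /=; rewrite mulrA.
Qed.

Lemma lin_ds G v : \sum_(t <- ds v) t.1 * G (mul t.2.1 t.2.2) =
  \sum_(x <- finsupp v) v x * \sum_(t <- Dseq x) t.1 * G (mul t.2.1 t.2.2).
Proof.
rewrite /ds big_flatten big_map; apply: eq_bigr => x _.
by rewrite big_map big_distrr; apply: eq_bigr => t _ /=; rewrite mulrA.
Qed.

Lemma exist_part I (v : vect H k) : (I != fset0 -> i0 \in I) -> in_kH I v ->
  exists p d, [/\ primitive I p, in_decomposables I d & forall x, v x = p x + d x].
Proof.
move=> hi0 kv.
exists (mk id (ps v)), (mk (fun yz => mul yz.1 yz.2) (ds v)); split.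
- split.
    move=> x /mk_supp [t /flattenP [s /mapP [w ws ->] /mapP [t' t'P ->]] <-] /=.
    by rewrite (Pn_lab HH t'P); apply: kv.
  move=> A B [dAB UAB nA nB] yz; rewrite copL_mk /cS lin_ps big_seq big1 // => w ws.
  have lw : lab w = I by apply: kv.
  have iI : i0 \in lab w.
    rewrite lw; apply: hi0; case: (fset_0Vmem A) nA => [->|[a aA]]; first by rewrite eqxx.
    by move=> _; apply: (@s_mem0 a); rewrite -UAB inE aA.
  rewrite [lin _ _](_ : _ = 0) ?mulr0 //; apply: (Pn_prim k HH Hcoc) => //; by rewrite lw; split.
- split.
    move=> x /mk_supp [t /flattenP [s /mapP [w ws ->] /mapP [t' t'P ->]] <-] /=.
    have [d U _ _] := Dseq_nt t'P.
    by rewrite mul_lab // U; apply: kv.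
  exists (ds v); split; last by move=> x; rewrite mkE.
  move=> t /flattenP [s /mapP [w ws ->] /mapP [t' t'P ->]] /=.
  by rewrite -(kv w ws); apply: Dseq_nt.
move=> x; rewrite !mkE.
have -> : \sum_(t <- ps v) t.1 * (id t.2 == x)%:R = lin (fun y => (y == x)%:R) (ps v) by [].
rewrite lin_ps (lin_ds (fun y => (y == x)%:R)) -big_split /=.
rewrite -[LHS]sum_supp_self; apply: eq_bigr => w _.
by rewrite lin_Pw mulrBr subrK.
Qed.

End Final.

Theorem mainTheorem9 (k : fieldType) (char0 : [pchar k]%R =i pred0)
  (H : posetHopfData) (HH : poset_hopf_monoid H) (Hsa : self_adjoint H)
  (I : {fset nat}) :
  direct_sum_p_d H k I.
Proof.
have [R [Rrefl Ranti Rtrans Radj]] : exists R : Defs.car H -> Defs.car H -> Prop,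
  [/\ (forall x, R x x), (forall x y, R x y -> R y x -> x = y),
      (forall x y z, R x y -> R y z -> R x z) &
      (forall S T x y z, [disjoint S & T] -> Defs.lab x = S `|` T -> Defs.lab y = S ->
        Defs.lab z = T -> (R (Defs.mul y z) x <-> R y (Defs.cop S T x).1 /\ R z (Defs.cop S T x).2))].
  case: (HH) => [[[_ lrefl lanti ltrans _] _ _] _].
  case: Hsa => h.
    exists (fun y x => Defs.le x y); split => //.
    - by move=> x y hxy hyx; apply: lanti.
    - by move=> x y z hxy hyz; apply: ltrans hyz hxy.
    - by move=> S T x y z d lx ly lz; apply: iff_sym; apply: h.
  exists (@Defs.le H); split => //.
have Hcoc := copC HH Rrefl Ranti Radj.
split.
  move=> v kv; apply: (exist_part HH Hcoc (i0 := head 0%N I)) => // nI.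
  case: (fset_0Vmem I) nI => [->|[a aI]]; first by rewrite eqxx.
  move=> _; move: aI.
  have h : forall x : nat, (x \in I) = (x \in enum_fset I) by [].
  rewrite !h; case: (enum_fset I) => //= b l _; exact: mem_head.
move=> v pv dv x; exact: (uniq_part Rrefl Ranti Rtrans Radj pv dv x).
Qed.
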